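(* Consider $N$ advertisers with click-through rates $c_i\in(0,1]$, abandonment probabilities $\gamma_i\ge0$, $\mu_i=c_i+\gamma_i\le 1$, and a fixed bid vector $(b_1,\dots,b_N)$, indexed in descending order of $\frac{b_ic_i}{\mu_i}$. Both the CE mechanism and the VCG mechanism rank the ads in this order. In the CE mechanism the ad at position $i$ pays per click $p_i^{CE}=\frac{b_{i+1}c_{i+1}\mu_i}{\mu_{i+1}c_i}$ (with $b_{N+1}=0$); in the VCG mechanism it pays per click $$p_i^{V}=\frac{\mu_i}{c_i}\sum_{j=i+1}^{N}b_jc_j\prod_{k=i+1}^{j-1}(1-\mu_k).$$ Then the search engine's expected revenue $\sum_{i=1}^N p_i\,c_i\prod_{l<i}(1-\mu_l)$ under the CE mechanism is greater than or equal to that under the VCG mechanism.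
   Context: Click model: users view ads top to bottom; having viewed the ad at position $i$ the user clicks it with probability $c_i$, abandons with probability $\gamma_i$, and otherwise moves on, so the ad at position $i$ is clicked with probability $c_i\prod_{l<i}(1-\mu_l)$. The VCG price above is the per-click version of the expected loss in value (measured by bids) that the ad at position $i$ imposes on the ads below it. *)

(* Defs.v *)
(* R is an abstract real field. Positions are 0-based: 0..N-1. *)
From mathcomp Require Import all_boot all_order all_algebra.
Set Implicit Arguments. Unset Strict Implicit. Unset Printing Implicit Defensive.
Import Order.TTheory GRing.Theory Num.Theory.
Local Open Scope ring_scope.

Section Auction.
Variables (R : realFieldType) (N : nat) (b c g : nat -> R).

Definition mu (i : nat) : R := c i + g i.

(* probability that the ad at position i is viewed: prod_{l<i} (1 - mu_l) *)
Definition reach (i : nat) : R := \prod_(0 <= l < i) (1 - mu l).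

(* CE price per click; b_{N+1} = 0 convention (0-based: b_N = 0) *)
Definition bid (i : nat) : R := if (i < N)%N then b i else 0.
Definition pCE (i : nat) : R :=
  bid i.+1 * c i.+1 * mu i / (mu i.+1 * c i).

Definition pVCG (i : nat) : R :=
  mu i / c i * \sum_(i.+1 <= j < N) b j * c j * \prod_(i.+1 <= k < j) (1 - mu k).

Definition revenue (p : nat -> R) : R :=
  \sum_(0 <= i < N) p i * c i * reach i.

End Auction.

(* Main.v *)
Require Import Defs.
From mathcomp Require Import all_boot all_order all_algebra.
From mathcomp Require Import ring lra zify.
Import Order.TTheory GRing.Theory Num.Theory.
Local Open Scope ring_scope.

Section Aux.
Variables (R : realFieldType) (N : nat) (b c g : nat -> R).
Hypothesis hc : forall i, (i < N)%N -> 0 < c i <= 1.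
Hypothesis hg : forall i, (i < N)%N -> 0 <= g i.
Hypothesis hmu : forall i, (i < N)%N -> mu c g i <= 1.
Hypothesis hb : forall i, (i < N)%N -> 0 <= b i.
Hypothesis hord : forall i j, (i <= j)%N -> (j < N)%N ->
     b j * c j / mu c g j <= b i * c i / mu c g i.

Definition P a j := \prod_(a <= k < j) (1 - mu c g k).
Definition S a := \sum_(a <= j < N) b j * c j * P a j.
Definition r a := b a * c a / mu c g a.

Lemma mu_pos {i} : (i < N)%N -> 0 < mu c g i.
Proof. move=> hi; have /andP[h1 _] := hc i hi; have := hg i hi; rewrite /mu; lra. Qed.

Lemma r_ge0 {i} : (i < N)%N -> 0 <= r i.
Proof.
move=> hi; rewrite /r; apply: divr_ge0; last exact: (ltW (mu_pos hi)).
apply: mulr_ge0; first exact: hb i hi. by have /andP[h1 _] := hc i hi; apply: ltW.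
Qed.

Lemma P_ge0 a j : (j <= N)%N -> 0 <= P a j.
Proof.
move=> hj; rewrite /P big_nat_cond; apply: prodr_ge0 => k /andP[/andP[_ hk] _].
have hkN : (k < N)%N by apply: leq_trans hk hj.
have := hmu k hkN; lra.
Qed.

Lemma S_rec a : (a < N)%N -> S a = b a * c a + (1 - mu c g a) * S a.+1.
Proof.
move=> ha; rewrite /S big_ltn // /P big_geq // mulr1; congr (_ + _).
rewrite mulr_sumr; apply: eq_big_nat => j /andP[hj _].
by rewrite big_ltn //; ring.
Qed.

Lemma SN : S N = 0.
Proof. by rewrite /S big_geq. Qed.

Lemma S_le n : forall a, (a + n.+1 = N)%N -> S a <= r a.
Proof.
elim: n => [|n IH] a ha.
  have haN : (a < N)%N by rewrite -ha addn1.
  rewrite S_rec // (_ : a.+1 = N); last by rewrite -ha addn1.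
  rewrite SN mulr0 addr0.
  have hm := mu_pos haN; have hm1 := hmu a haN; have hr := r_ge0 haN.
  have -> : b a * c a = r a * mu c g a by rewrite /r mulrVK // unitfE gt_eqF.
  by rewrite ler_piMr.
have haN : (a.+1 < N)%N by lia.
have haN' : (a < N)%N by apply: ltnW.
have h1 : S a.+1 <= r a.+1 by apply: IH; lia.
have h2 : r a.+1 <= r a by apply: hord => //; apply: leqnSn.
rewrite S_rec //.
have hm := mu_pos haN'; have hm1 := hmu a haN'.
have -> : b a * c a = r a * mu c g a by rewrite /r mulrVK // unitfE gt_eqF.
have : (1 - mu c g a) * S a.+1 <= (1 - mu c g a) * r a.
  by apply: ler_wpM2l; [lra | lra].
lra.
Qed.

Lemma S_le' a : (a < N)%N -> S a <= r a.
Proof.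
move=> ha; apply: (@S_le (N - a.+1)); rewrite addnS -addSn subnKC //.
Qed.

End Aux.

Theorem theorem4 (R : realFieldType) (N : nat) (b c g : nat -> R)
  (hc : forall i, (i < N)%N -> 0 < c i <= 1)
  (hg : forall i, (i < N)%N -> 0 <= g i)
  (hmu : forall i, (i < N)%N -> mu c g i <= 1)
  (hb : forall i, (i < N)%N -> 0 <= b i)
  (hord : forall i j, (i <= j)%N -> (j < N)%N ->
     b j * c j / mu c g j <= b i * c i / mu c g i) :
  revenue N c g (pVCG N b c g) <= revenue N c g (pCE N b c g).
Proof.
rewrite /revenue; apply: ler_sum_nat => i /andP[_ hi].
have /andP[hci _] := hc i hi.
have hmi := @mu_pos R N c g hc hg i hi.
apply: ler_wpM2r.
  by rewrite /reach; apply: (@P_ge0 R N c g hmu) => //; apply: ltnW.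
apply: ler_wpM2r; first exact: ltW.
rewrite /pVCG.
have -> : (\sum_(i.+1 <= j < N) b j * c j * \prod_(i.+1 <= k < j) (1 - mu c g k))
   = S R N b c g i.+1 by [].
case: (ltnP i.+1 N) => hiN.
  have hm1 := @mu_pos R N c g hc hg i.+1 hiN.
  have -> : pCE N b c g i = mu c g i / c i * r R b c g i.+1.
    rewrite /pCE /bid hiN /r; field.
    by apply/andP; split; rewrite gt_eqF.
  apply: ler_wpM2l; first by apply: divr_ge0; apply: ltW.
  exact: (@S_le' R N b c g hc hg hmu hb hord).
have hiN' : i.+1 = N by apply/eqP; rewrite eqn_leq hiN hi.
rewrite /pCE /bid hiN' (@SN R N b c g) ltnn !mul0r mulr0.
done.
Qed.
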